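(* Let $d_0,d_1>0$ with $d_0+d_1=1$, and let $C_\alpha>0$, $C_\beta>0$. With $f_{j+i}=f(x_{j+i})$ on a uniform grid $x_{j+i}=x_j+i\Delta x$, define $\beta_0^*,\beta_1^*$ and $\tau_4$ by $$\beta_0^*=\tfrac14(3f_j-4f_{j-1}+f_{j-2})^2+C_\beta(f_{j-2}-2f_{j-1}+f_j)^2,\quad \beta_1^*=\tfrac14(3f_j-4f_{j+1}+f_{j+2})^2+C_\beta(f_j-2f_{j+1}+f_{j+2})^2,$$ $$\tau_4=\bigl|(f_{j+2}-3f_{j+1}+3f_j-f_{j-1})(2f_{j+1}-3f_j+f_{j-1})\bigr|,$$ and the nonlinear weights (with exponent $p=1$ and $\varepsilon=0$) $$\alpha_k=d_k\bigl(1+C_\alpha\,\tau_4/\beta_k^*\bigr),\qquad \omega_k=\frac{\alpha_k}{\alpha_0+\alpha_1},\quad k=0,1.$$ Assume $f$ is $C^6$ near the relevant points. Then $\omega_k-d_k=O(\Delta x^2)$ as $\Delta x\to0^+$ in each of the following situations: (1) $x_j=x^*$ is fixed and $f'(x^* )\ne0$; (2) $f'(x_c)=0$, $f''(x_c)\ne0$, $f'''(x_c)\ne0$ and, for a fixed $\lambda\in(-1,1)$, the grid is placed so that $x_c=x_j+\lambda\Delta x$.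
   Context: This is the weight construction of the WENO3-Z$_{ES4}$ scheme (which uses $C_\beta=2.0$, $C_\alpha=1.3$, $p=1$); $d_k$ are the linear weights of the third-order WENO reconstruction, $\beta_k^*$ the local smoothness indicators, $\tau_4$ the global smoothness indicator. The condition $\omega_k-d_k=O(\Delta x^2)$ is the standard sufficient condition for third-order accuracy of the WENO3 reconstruction. A point $x_c$ with $f'(x_c)=0$, $f''(x_c)\ne0$, $f'''(x_c)\ne0$ is a first-order critical point ($CP_1$). *)

(* Defs.v *)
From Stdlib Require Import Reals.
From Coquelicot Require Import Coquelicot.
Open Scope R_scope.

Definition fv (f : R -> R) (xj dx : R) (i : Z) : R := f (xj + IZR i * dx).

Definition beta0s (Cb : R) (f : R -> R) (xj dx : R) : R :=
  let fm2 := fv f xj dx (-2) in let fm1 := fv f xj dx (-1) in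
  let f0 := fv f xj dx 0 in
  / 4 * (3 * f0 - 4 * fm1 + fm2) ^ 2 + Cb * (fm2 - 2 * fm1 + f0) ^ 2.

Definition beta1s (Cb : R) (f : R -> R) (xj dx : R) : R :=
  let f0 := fv f xj dx 0 in let fp1 := fv f xj dx 1 in
  let fp2 := fv f xj dx 2 in
  / 4 * (3 * f0 - 4 * fp1 + fp2) ^ 2 + Cb * (f0 - 2 * fp1 + fp2) ^ 2.

Definition tau4 (f : R -> R) (xj dx : R) : R :=
  let fm1 := fv f xj dx (-1) in let f0 := fv f xj dx 0 in
  let fp1 := fv f xj dx 1 in let fp2 := fv f xj dx 2 in
  Rabs ((fp2 - 3 * fp1 + 3 * f0 - fm1) * (2 * fp1 - 3 * f0 + fm1)).

Definition alpha0 (d0 Ca Cb : R) (f : R -> R) (xj dx : R) : R :=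
  d0 * (1 + Ca * (tau4 f xj dx / beta0s Cb f xj dx)).
Definition alpha1 (d1 Ca Cb : R) (f : R -> R) (xj dx : R) : R :=
  d1 * (1 + Ca * (tau4 f xj dx / beta1s Cb f xj dx)).

Definition omega0 (d0 d1 Ca Cb : R) (f : R -> R) (xj dx : R) : R :=
  alpha0 d0 Ca Cb f xj dx / (alpha0 d0 Ca Cb f xj dx + alpha1 d1 Ca Cb f xj dx).
Definition omega1 (d0 d1 Ca Cb : R) (f : R -> R) (xj dx : R) : R :=
  alpha1 d1 Ca Cb f xj dx / (alpha0 d0 Ca Cb f xj dx + alpha1 d1 Ca Cb f xj dx).

Definition C6_near (f : R -> R) (a : R) : Prop :=
  exists r : R, 0 < r /\
    forall x : R, Rabs (x - a) < r ->
      (forall k : nat, (k <= 6)%nat -> ex_derive_n f k x) /\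
      continuous (Derive_n f 6) x.

Definition bigO_sq_right (g : R -> R) : Prop :=
  exists M delta : R, 0 < delta /\
    forall dx : R, 0 < dx < delta -> Rabs (g dx) <= M * dx ^ 2.

(* Main.v *)
From Stdlib Require Import Reals Lra Lia.
From Stdlib Require Import Reals.
From Coquelicot Require Import Coquelicot.
Require Import Defs.
Open Scope R_scope.

Definition Tn (f : R -> R) (a : R) (n : nat) (s : R) : R :=
  sum_f_R0 (fun k => s ^ k / INR (Factorial.fact k) * Derive_n f k a) n.

Lemma cont_bound (g : R -> R) a : continuous g a ->
  exists d, 0 < d /\ forall t, Rabs (t - a) < d -> Rabs (g t) <= Rabs (g a) + 1.
Proof.
intros Hc.
assert (H: locally a (fun t => Rabs (g t - g a) < 1)).
{ apply (Hc (fun y => Rabs (y - g a) < 1)). exists (mkposreal 1 Rlt_0_1). intros y Hy. exact Hy. }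
destruct H as [eps He]. exists eps. split. apply cond_pos. intros t Ht.
assert (H1 := He t Ht).
assert (H2 := Rabs_triang_inv (g t) (g a)). lra.
Qed.

Lemma Tn_zero f a n : Tn f a n 0 = f a.
Proof.
unfold Tn. induction n as [|n IH].
- simpl. field.
- cbn [sum_f_R0]. rewrite IH. cbn [pow]. unfold Rdiv. ring.
Qed.

Lemma fact_ge1 k : 1 <= INR (Factorial.fact k).
Proof. apply (le_INR 1). apply Factorial.lt_O_fact. Qed.

Lemma taylor (f : R -> R) a r : 0 < r ->
  (forall x, Rabs (x - a) < r -> forall k, (k <= 6)%nat -> ex_derive_n f k x) ->
  forall n, (n <= 4)%nat ->
  exists d K, 0 < d /\ 0 <= K /\ forall s, Rabs s < d ->
    Rabs (f (a + s) - Tn f a n s) <= K * Rabs s ^ (S n).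
Proof.
intros Hr Hd n Hn.
assert (Hc : continuous (Derive_n f (S n)) a).
{ apply (@ex_derive_continuous R_AbsRing R_NormedModule). apply (Hd a) with (k := S (S n)).
  rewrite Rminus_diag, Rabs_R0; exact Hr. lia. }
destruct (cont_bound _ _ Hc) as [d1 [Hd1 Hb]].
exists (Rmin d1 r), (Rabs (Derive_n f (S n) a) + 1). split; [|split].
- apply Rmin_pos; assumption.
- pose proof (Rabs_pos (Derive_n f (S n) a)); lra.
- intros s Hs.
  assert (Hs1 : Rabs s < d1) by (eapply Rlt_le_trans; [exact Hs| apply Rmin_l]).
  assert (Hs2 : Rabs s < r) by (eapply Rlt_le_trans; [exact Hs| apply Rmin_r]).
  set (B := Rabs (Derive_n f (S n) a) + 1) in *.
  destruct (Rtotal_order s 0) as [Hneg|[H0|Hpos]].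
  +
    pose proof Hs1 as Hs1'; pose proof Hs2 as Hs2'.
    rewrite Rabs_left in Hs1', Hs2' by lra.
    set (g := fun y => f (- y)).
    assert (Hloc : forall t, Rabs (t - a) < r -> locally t (fun y : R_UniformSpace => forall k, (k <= S n)%nat -> ex_derive_n f k y)).
    { intros t Ht. assert (He : 0 < r - Rabs (t - a)) by lra.
      exists (mkposreal _ He). intros y Hy k Hk. apply Hd. 2: lia.
      change (Rabs (y - t) < r - Rabs (t - a)) in Hy.
      pose proof (Rabs_triang (y - t) (t - a)).
      replace (y - t + (t - a)) with (y - a) in H by ring. lra. }
    destruct (Taylor_Lagrange g n (- a) (- (a + s))) as [z [Hz Heq]].
    { lra. }
    { intros t Ht k Hk. apply ex_derive_n_comp_opp.
      eapply filter_imp; [|exact (Hloc (- t) ltac:(apply Rabs_def1; lra))].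
      intros y Hy k' Hk'. apply Hy. lia. }
    unfold g in Heq at 1. rewrite Ropp_involutive in Heq. rewrite Heq.
    assert (Hsum : sum_f_R0 (fun m => (- (a + s) - - a) ^ m / INR (Factorial.fact m) * Derive_n g m (- a)) n = Tn f a n s).
    { unfold Tn. apply sum_eq. intros i Hi. unfold g.
      rewrite Derive_n_comp_opp.
      2: { rewrite Ropp_involutive. eapply filter_imp; [|exact (Hloc a ltac:(rewrite Rminus_diag, Rabs_R0; lra))].
           intros y Hy k' Hk'. apply Hy. lia. }
      rewrite Ropp_involutive.
      replace (- (a + s) - - a) with ((-1) * s) by ring. rewrite Rpow_mult_distr.
      replace ((-1) ^ i * s ^ i / INR (Factorial.fact i) * ((-1) ^ i * Derive_n f i a))
        with (((-1) ^ i * (-1) ^ i) * (s ^ i / INR (Factorial.fact i) * Derive_n f i a)) by (unfold Rdiv; ring).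
      rewrite <- Rpow_mult_distr. replace (-1 * -1) with 1 by ring. rewrite pow1. ring. }
    rewrite Hsum. unfold g.
    rewrite Derive_n_comp_opp.
    2: { eapply filter_imp; [|exact (Hloc (- z) ltac:(apply Rabs_def1; lra))]. tauto. }
    replace (- (a + s) - - a) with ((-1) * s) by ring.
    replace (Tn f a n s + ((-1) * s) ^ S n / INR (Factorial.fact (S n)) * ((-1) ^ S n * Derive_n f (S n) (- z)) - Tn f a n s)
          with (((-1) * s) ^ S n * (-1) ^ S n * Derive_n f (S n) (- z) / INR (Factorial.fact (S n))) by (unfold Rdiv; ring).
    unfold Rdiv. rewrite !Rabs_mult. rewrite Rabs_Rinv by (pose proof (fact_ge1 (S n)); lra).
    rewrite <- !RPow_abs. replace (Rabs (-1 * s)) with (Rabs s) by (rewrite Rabs_mult, Rabs_m1; ring).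
    replace (Rabs (-1)) with 1 by (rewrite Rabs_m1; ring). rewrite pow1.
    assert (HB : Rabs (Derive_n f (S n) (- z)) <= B) by (apply Hb; apply Rabs_def1; lra).
    pose proof (fact_ge1 (S n)).
    assert (0 < / Rabs (INR (Factorial.fact (S n))) <= 1).
    { rewrite Rabs_pos_eq by lra. split. apply Rinv_0_lt_compat; lra.
      rewrite <- Rinv_1. apply Rinv_le_contravar; lra. }
    pose proof (pow_le (Rabs s) (S n) (Rabs_pos s)).
    pose proof (Rabs_pos (Derive_n f (S n) (- z))).
    replace (Rabs s ^ S n * 1 * Rabs (Derive_n f (S n) (- z)) * / Rabs (INR (Factorial.fact (S n))))
      with ((Rabs s ^ S n) * (Rabs (Derive_n f (S n) (- z)) * / Rabs (INR (Factorial.fact (S n))))) by ring.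
    rewrite (Rmult_comm B). apply Rmult_le_compat_l; [lra|].
    assert (Rabs (Derive_n f (S n) (- z)) * / Rabs (INR (Factorial.fact (S n))) <= Rabs (Derive_n f (S n) (- z)) * 1)
      by (apply Rmult_le_compat_l; lra). lra.
  + subst s. rewrite Tn_zero, Rplus_0_r, Rminus_diag, Rabs_R0.
    rewrite pow_i by lia. lra.
  + pose proof Hs1 as Hs1'; pose proof Hs2 as Hs2'.
    rewrite Rabs_right in Hs1', Hs2' by lra.
    destruct (Taylor_Lagrange f n a (a + s)) as [z [Hz Heq]].
    { lra. }
    { intros t Ht k Hk. apply Hd. apply Rabs_def1; lra. lia. }
    rewrite Heq. replace (a + s - a) with s by ring. fold (Tn f a n s).
    replace (Tn f a n s + s ^ S n / INR (Factorial.fact (S n)) * Derive_n f (S n) z - Tn f a n s)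
      with (s ^ S n * Derive_n f (S n) z / INR (Factorial.fact (S n))) by (unfold Rdiv; ring).
    unfold Rdiv. rewrite !Rabs_mult. rewrite Rabs_Rinv by (pose proof (fact_ge1 (S n)); lra).
    rewrite <- !RPow_abs.
    assert (HB : Rabs (Derive_n f (S n) z) <= B) by (apply Hb; apply Rabs_def1; lra).
    pose proof (fact_ge1 (S n)).
    assert (0 < / Rabs (INR (Factorial.fact (S n))) <= 1).
    { rewrite Rabs_pos_eq by lra. split. apply Rinv_0_lt_compat; lra.
      rewrite <- Rinv_1. apply Rinv_le_contravar; lra. }
    pose proof (pow_le (Rabs s) (S n) (Rabs_pos s)).
    pose proof (Rabs_pos (Derive_n f (S n) z)).
    rewrite Rmult_assoc. rewrite (Rmult_comm B). apply Rmult_le_compat_l; [lra|].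
    assert (Rabs (Derive_n f (S n) z) * / Rabs (INR (Factorial.fact (S n))) <= Rabs (Derive_n f (S n) z) * 1)
      by (apply Rmult_le_compat_l; lra). lra.
Qed.
Ltac absnum := unfold Rabs; repeat (destruct (Rcase_abs _)); lra.

Lemma pt_bound f a n d K (HT : forall s, Rabs s < d -> Rabs (f (a + s) - Tn f a n s) <= K * Rabs s ^ (S n))
  (HK : 0 <= K) xj mu h (Hxj : xj = a + mu * h) (Hmu : Rabs mu <= 1) (Hh : 0 < h) (Hhd : 3 * h < d) c :
  Rabs c <= 2 -> Rabs (f (xj + c * h) - Tn f a n ((mu + c) * h)) <= K * (3 * h) ^ (S n).
Proof.
intros Hc. subst xj.
assert (Hs : Rabs ((mu + c) * h) <= 3 * h).
{ rewrite Rabs_mult, (Rabs_pos_eq h) by lra.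
  pose proof (Rabs_triang mu c). apply Rmult_le_compat_r; lra. }
replace (a + mu * h + c * h) with (a + (mu + c) * h) by ring.
eapply Rle_trans. apply HT. lra.
apply Rmult_le_compat_l; auto. apply pow_incr. split; auto. apply Rabs_pos.
Qed.

Lemma comb f a n d K (HT : forall s, Rabs s < d -> Rabs (f (a + s) - Tn f a n s) <= K * Rabs s ^ (S n))
  (HK : 0 <= K) xj mu h (Hxj : xj = a + mu * h) (Hmu : Rabs mu <= 1) (Hh : 0 < h) (Hhd : 3 * h < d)
  wm2 wm1 w0 w1 w2 X p W :
  X = wm2 * fv f xj h (-2) + wm1 * fv f xj h (-1) + w0 * fv f xj h 0 + w1 * fv f xj h 1 + w2 * fv f xj h 2 ->
  wm2 * Tn f a n ((mu + -2) * h) + wm1 * Tn f a n ((mu + -1) * h) + w0 * Tn f a n ((mu + 0) * h)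
    + w1 * Tn f a n ((mu + 1) * h) + w2 * Tn f a n ((mu + 2) * h) = p ->
  Rabs wm2 + Rabs wm1 + Rabs w0 + Rabs w1 + Rabs w2 <= W ->
  Rabs (X - p) <= W * (K * (3 * h) ^ (S n)).
Proof.
intros HX Hp HW. subst X p. unfold fv.
set (E := K * (3 * h) ^ (S n)).
assert (HE : 0 <= E) by (unfold E; apply Rmult_le_pos; auto; apply pow_le; lra).
assert (B : forall c, Rabs c <= 2 -> Rabs (f (xj + c * h) - Tn f a n ((mu + c) * h)) <= E)
  by (intros; eapply pt_bound; eauto).
assert (Bm2 := B (-2) ltac:(absnum)).
assert (Bm1 := B (-1) ltac:(absnum)).
assert (B0 := B 0 ltac:(absnum)).
assert (B1 := B 1 ltac:(absnum)).
assert (B2 := B 2 ltac:(absnum)).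
set (e := fun c => f (xj + c * h) - Tn f a n ((mu + c) * h)) in *.
replace (wm2 * f (xj + IZR (-2) * h) + wm1 * f (xj + IZR (-1) * h) + w0 * f (xj + IZR 0 * h) +
   w1 * f (xj + IZR 1 * h) + w2 * f (xj + IZR 2 * h) -
   (wm2 * Tn f a n ((mu + -2) * h) + wm1 * Tn f a n ((mu + -1) * h) + w0 * Tn f a n ((mu + 0) * h) +
    w1 * Tn f a n ((mu + 1) * h) + w2 * Tn f a n ((mu + 2) * h)))
  with (wm2 * e (-2) + wm1 * e (-1) + w0 * e 0 + w1 * e 1 + w2 * e 2) by (unfold e; ring).
assert (T : forall w c, Rabs (e c) <= E -> Rabs (w * e c) <= Rabs w * E).
{ intros w c Hc. rewrite Rabs_mult. apply Rmult_le_compat_l; auto. apply Rabs_pos. }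
eapply Rle_trans. repeat (eapply Rle_trans; [apply Rabs_triang|apply Rplus_le_compat; [|apply T; eauto]]).
apply T; eauto.
assert (Rabs wm2 * E + Rabs wm1 * E + Rabs w0 * E + Rabs w1 * E + Rabs w2 * E
  = (Rabs wm2 + Rabs wm1 + Rabs w0 + Rabs w1 + Rabs w2) * E) by ring.
rewrite H. apply Rmult_le_compat_r; auto.
Qed.
Lemma Tn0 f a s : Tn f a 0 s = f a.
Proof. unfold Tn. simpl. field. Qed.
Lemma Tn1 f a s : Tn f a 1 s = f a + s * Derive_n f 1 a.
Proof. unfold Tn. simpl. field. Qed.
Lemma Tn2 f a s : Tn f a 2 s = f a + s * Derive_n f 1 a + s^2/2 * Derive_n f 2 a.
Proof. unfold Tn. simpl. field. Qed.
Lemma Tn3 f a s : Tn f a 3 s = f a + s * Derive_n f 1 a + s^2/2 * Derive_n f 2 a + s^3/6 * Derive_n f 3 a.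
Proof. unfold Tn. simpl. field. Qed.

Lemma omega_diff d0 d1 Ca t0 t1 : 0 < d0 -> 0 < d1 -> d0 + d1 = 1 -> 0 < Ca -> 0 <= t0 -> 0 <= t1 ->
  Rabs (d0 * (1 + Ca * t0) / (d0 * (1 + Ca * t0) + d1 * (1 + Ca * t1)) - d0) <= d0 * d1 * Ca * Rabs (t0 - t1) /\
  Rabs (d1 * (1 + Ca * t1) / (d0 * (1 + Ca * t0) + d1 * (1 + Ca * t1)) - d1) <= d0 * d1 * Ca * Rabs (t0 - t1).
Proof.
intros. set (S := d0 * (1 + Ca * t0) + d1 * (1 + Ca * t1)).
assert (HS : 1 <= S).
{ unfold S. assert (0 <= Ca * t0) by (apply Rmult_le_pos; lra).
  assert (0 <= Ca * t1) by (apply Rmult_le_pos; lra). nra. }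
assert (E1 : d0 * (1 + Ca * t0) / S - d0 = d0 * d1 * Ca * (t0 - t1) / S).
{ assert (N : d0 * (1 + Ca * t0) - d0 * S = d0 * d1 * Ca * (t0 - t1)) by (unfold S; replace d0 with (1 - d1) by lra; ring).
  rewrite <- N. clearbody S. field. lra. }
assert (E2 : d1 * (1 + Ca * t1) / S - d1 = - (d0 * d1 * Ca * (t0 - t1)) / S).
{ assert (N : d1 * (1 + Ca * t1) - d1 * S = - (d0 * d1 * Ca * (t0 - t1))) by (unfold S; replace d0 with (1 - d1) by lra; ring).
  rewrite <- N. clearbody S. field. lra. }
assert (K : Rabs (d0 * d1 * Ca * (t0 - t1) / S) <= d0 * d1 * Ca * Rabs (t0 - t1)).
{ unfold Rdiv. rewrite !Rabs_mult. rewrite (Rabs_pos_eq d0), (Rabs_pos_eq d1), (Rabs_pos_eq Ca) by lra.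
  rewrite Rabs_Rinv by lra. rewrite (Rabs_pos_eq S) by lra.
  assert (0 < / S <= 1). { split. apply Rinv_0_lt_compat; lra. rewrite <- Rinv_1. apply Rinv_le_contravar; lra. }
  assert (0 <= d0 * d1 * Ca * Rabs (t0 - t1)).
  { apply Rmult_le_pos. apply Rmult_le_pos. nra. lra. apply Rabs_pos. }
  nra. }
split. rewrite E1. exact K. rewrite E2. unfold Rdiv in *. rewrite Ropp_mult_distr_l_reverse, Rabs_Ropp. exact K.
Qed.

Lemma lower_sq A p e : Rabs (A - p) <= e -> e <= Rabs p / 2 -> p ^ 2 / 4 <= A ^ 2.
Proof.
intros H1 H2.
pose proof (Rabs_triang_inv p (p - A)). replace (p - (p - A)) with A in H by ring.
rewrite <- Rabs_Ropp in H1. replace (- (A - p)) with (p - A) in H1 by ring.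
assert (Rabs p / 2 <= Rabs A) by lra.
rewrite <- (pow2_abs A), <- (pow2_abs p).
pose proof (Rabs_pos p). nra.
Qed.

Lemma div_le x X y Y : 0 <= x -> x <= X -> 0 < Y -> Y <= y -> x / y <= X / Y.
Proof.
intros. unfold Rdiv. apply Rmult_le_compat; try lra.
apply Rlt_le, Rinv_0_lt_compat; lra.
apply Rinv_le_contravar; lra.
Qed.

Lemma prod_le x X y Y : Rabs x <= X -> Rabs y <= Y -> Rabs (x * y) <= X * Y.
Proof.
intros. rewrite Rabs_mult. apply Rmult_le_compat; auto; apply Rabs_pos.
Qed.

Lemma lt_div x a b : 0 < b -> x < a / b -> x * b < a.
Proof.
intros Hb H. apply (Rmult_lt_compat_r b) in H; auto.
replace (a / b * b) with a in H by (field; lra). exact H.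
Qed.

Lemma case1 Cb f xs : 0 < Cb -> C6_near f xs -> Derive_n f 1 xs <> 0 ->
  exists M delta, 0 < delta /\ forall h, 0 < h < delta ->
    0 <= tau4 f xs h / beta0s Cb f xs h /\ 0 <= tau4 f xs h / beta1s Cb f xs h /\
    Rabs (tau4 f xs h / beta0s Cb f xs h - tau4 f xs h / beta1s Cb f xs h) <= M * h ^ 2.
Proof.
intros HCb [r [Hr Hrr]] Hc1.
assert (Hd : forall x, Rabs (x - xs) < r -> forall k, (k <= 6)%nat -> ex_derive_n f k x)
  by (intros x Hx; apply Hrr; auto).
destruct (taylor f xs r Hr Hd 0 ltac:(lia)) as [e0 [K0 [He0 [HK0 HT0]]]].
destruct (taylor f xs r Hr Hd 1 ltac:(lia)) as [e1 [K1 [He1 [HK1 HT1]]]].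
destruct (taylor f xs r Hr Hd 2 ltac:(lia)) as [e2 [K2 [He2 [HK2 HT2]]]].
set (c1 := Derive_n f 1 xs) in *.
assert (Hac1 : 0 < Rabs c1) by (apply Rabs_pos_lt; auto).
set (T := (8 * (K2 * 27)) * (6 * (K0 * 3))).
assert (HT : 0 <= T) by (unfold T; nra).
set (c := c1 ^ 2 / 4).
assert (Hc : 0 < c) by (unfold c; pose proof (pow2_gt_0 c1 Hc1); nra).
exists (2 * (T / c)), (Rmin (Rmin (e0 / 3) (e1 / 3)) (Rmin (e2 / 3) (Rabs c1 / (72 * K1 + 1)))).
split.
{ repeat apply Rmin_pos; try lra. apply Rdiv_lt_0_compat; lra. }
intros h [hpos hlt].
assert (h0 : 3 * h < e0) by (pose proof (Rmin_l (Rmin (e0 / 3) (e1 / 3)) (Rmin (e2 / 3) (Rabs c1 / (72 * K1 + 1)))); pose proof (Rmin_l (e0/3) (e1/3)); lra).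
assert (h1 : 3 * h < e1) by (pose proof (Rmin_l (Rmin (e0 / 3) (e1 / 3)) (Rmin (e2 / 3) (Rabs c1 / (72 * K1 + 1)))); pose proof (Rmin_r (e0/3) (e1/3)); lra).
assert (h2 : 3 * h < e2) by (pose proof (Rmin_r (Rmin (e0 / 3) (e1 / 3)) (Rmin (e2 / 3) (Rabs c1 / (72 * K1 + 1)))); pose proof (Rmin_l (e2/3) (Rabs c1 / (72 * K1 + 1))); lra).
assert (h3 : h * (72 * K1 + 1) < Rabs c1).
{ apply lt_div. lra. pose proof (Rmin_r (Rmin (e0 / 3) (e1 / 3)) (Rmin (e2 / 3) (Rabs c1 / (72 * K1 + 1)))); pose proof (Rmin_r (e2/3) (Rabs c1 / (72 * K1 + 1))); lra. }
assert (Hxj : xs = xs + 0 * h) by ring.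
assert (Hmu : Rabs 0 <= 1) by (rewrite Rabs_R0; lra).
assert (HA0 : Rabs ((3 * fv f xs h 0 - 4 * fv f xs h (-1) + fv f xs h (-2)) - 2 * h * c1) <= 8 * (K1 * (3 * h) ^ 2)).
{ apply (comb f xs 1 e1 K1 HT1 HK1 xs 0 h Hxj Hmu hpos h1 1 (-4) 3 0 0);
  [ring | rewrite !Tn1; unfold c1; ring | absnum]. }
assert (HA1 : Rabs ((3 * fv f xs h 0 - 4 * fv f xs h 1 + fv f xs h 2) - (-2) * h * c1) <= 8 * (K1 * (3 * h) ^ 2)).
{ apply (comb f xs 1 e1 K1 HT1 HK1 xs 0 h Hxj Hmu hpos h1 0 0 3 (-4) 1);
  [ring | rewrite !Tn1; unfold c1; ring | absnum]. }
assert (HD3 : Rabs ((fv f xs h 2 - 3 * fv f xs h 1 + 3 * fv f xs h 0 - fv f xs h (-1)) - 0) <= 8 * (K2 * (3 * h) ^ 3)).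
{ apply (comb f xs 2 e2 K2 HT2 HK2 xs 0 h Hxj Hmu hpos h2 0 (-1) 3 (-3) 1);
  [ring | rewrite !Tn2; field | absnum]. }
assert (HD2 : Rabs ((2 * fv f xs h 1 - 3 * fv f xs h 0 + fv f xs h (-1)) - 0) <= 6 * (K0 * (3 * h) ^ 1)).
{ apply (comb f xs 0 e0 K0 HT0 HK0 xs 0 h Hxj Hmu hpos h0 0 1 (-3) 2 0);
  [ring | rewrite !Tn0; ring | absnum]. }
rewrite Rminus_0_r in HD3, HD2.
assert (Htau : tau4 f xs h <= T * h ^ 4).
{ unfold tau4. eapply Rle_trans. apply prod_le; [exact HD3 | exact HD2]. unfold T. right. ring. }
assert (Htau0 : 0 <= tau4 f xs h) by (unfold tau4; apply Rabs_pos).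
assert (Hh2 : 0 < h ^ 2) by (apply pow_lt; lra).
assert (Hb0 : c * h ^ 2 <= beta0s Cb f xs h).
{ unfold beta0s. cbv zeta.
  assert (L := lower_sq _ _ _ HA0 ltac:(rewrite Rabs_mult, Rabs_mult, (Rabs_pos_eq 2), (Rabs_pos_eq h) by lra; nra)).
  pose proof (pow2_ge_0 (fv f xs h (-2) - 2 * fv f xs h (-1) + fv f xs h 0)).
  unfold c. nra. }
assert (Hb1 : c * h ^ 2 <= beta1s Cb f xs h).
{ unfold beta1s. cbv zeta.
  assert (L := lower_sq _ _ _ HA1 ltac:(rewrite Rabs_mult, Rabs_mult, (Rabs_pos_eq h) by lra; unfold Rabs at 1; destruct (Rcase_abs (-2)); nra)).
  pose proof (pow2_ge_0 (fv f xs h 0 - 2 * fv f xs h 1 + fv f xs h 2)).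
  unfold c. nra. }
assert (Hch : 0 < c * h ^ 2) by nra.
assert (Ht0 : tau4 f xs h / beta0s Cb f xs h <= (T / c) * h ^ 2).
{ replace ((T / c) * h ^ 2) with ((T * h ^ 4) / (c * h ^ 2)) by (field; lra).
  apply div_le; auto. }
assert (Ht1 : tau4 f xs h / beta1s Cb f xs h <= (T / c) * h ^ 2).
{ replace ((T / c) * h ^ 2) with ((T * h ^ 4) / (c * h ^ 2)) by (field; lra).
  apply div_le; auto. }
assert (P0 : 0 <= tau4 f xs h / beta0s Cb f xs h) by (apply Rdiv_le_0_compat; lra).
assert (P1 : 0 <= tau4 f xs h / beta1s Cb f xs h) by (apply Rdiv_le_0_compat; lra).
split; [exact P0|split; [exact P1|]].
unfold Rabs; destruct (Rcase_abs _); lra.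
Qed.

Lemma case2 Cb f xc lam : 0 < Cb -> C6_near f xc -> Derive_n f 1 xc = 0 -> Derive_n f 2 xc <> 0 ->
  -1 < lam < 1 ->
  exists M delta, 0 < delta /\ forall h, 0 < h < delta ->
    0 <= tau4 f (xc - lam * h) h / beta0s Cb f (xc - lam * h) h /\
    0 <= tau4 f (xc - lam * h) h / beta1s Cb f (xc - lam * h) h /\
    Rabs (tau4 f (xc - lam * h) h / beta0s Cb f (xc - lam * h) h
          - tau4 f (xc - lam * h) h / beta1s Cb f (xc - lam * h) h) <= M * h ^ 2.
Proof.
intros HCb [r [Hr Hrr]] H1 Hc2 Hlam.
assert (Hd : forall x, Rabs (x - xc) < r -> forall k, (k <= 6)%nat -> ex_derive_n f k x)
  by (intros x Hx; apply Hrr; auto).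
destruct (taylor f xc r Hr Hd 1 ltac:(lia)) as [e1 [K1 [He1 [HK1 HT1]]]].
destruct (taylor f xc r Hr Hd 2 ltac:(lia)) as [e2 [K2 [He2 [HK2 HT2]]]].
destruct (taylor f xc r Hr Hd 3 ltac:(lia)) as [e3 [K3 [He3 [HK3 HT3]]]].
set (c2 := Derive_n f 2 xc) in *.
assert (Hac2 : 0 < Rabs c2) by (apply Rabs_pos_lt; auto).
set (T := (8 * (K2 * 27)) * (6 * (K1 * 9))).
assert (HT : 0 <= T) by (unfold T; nra).
set (D := / 4 * (10 * (K1 * 9)) * (16 * (K3 * 81)) + Cb * (6 * (K2 * 27)) * (8 * (K1 * 9))).
assert (HD : 0 <= D).
{ unfold D. apply Rplus_le_le_0_compat; repeat apply Rmult_le_pos; lra. }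
set (c := Cb * (c2 ^ 2 / 4)).
assert (Hc : 0 < c) by (unfold c; pose proof (pow2_gt_0 c2 Hc2); nra).
set (del := Rmin (Rmin (e1 / 3) (e2 / 3)) (Rmin (e3 / 3) (Rmin 1 (Rabs c2 / (216 * K2 + 1))))).
exists (T * D / (c * c)), del.
split.
{ unfold del. repeat apply Rmin_pos; try lra. apply Rdiv_lt_0_compat; lra. }
intros h [hpos hlt].
assert (Q1 := Rmin_l (Rmin (e1 / 3) (e2 / 3)) (Rmin (e3 / 3) (Rmin 1 (Rabs c2 / (216 * K2 + 1))))).
assert (Q2 := Rmin_r (Rmin (e1 / 3) (e2 / 3)) (Rmin (e3 / 3) (Rmin 1 (Rabs c2 / (216 * K2 + 1))))).
assert (Q3 := Rmin_l (e1 / 3) (e2 / 3)).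
assert (Q4 := Rmin_r (e1 / 3) (e2 / 3)).
assert (Q5 := Rmin_l (e3 / 3) (Rmin 1 (Rabs c2 / (216 * K2 + 1)))).
assert (Q6 := Rmin_r (e3 / 3) (Rmin 1 (Rabs c2 / (216 * K2 + 1)))).
assert (Q7 := Rmin_l 1 (Rabs c2 / (216 * K2 + 1))).
assert (Q8 := Rmin_r 1 (Rabs c2 / (216 * K2 + 1))).
fold del in Q1, Q2.
assert (h1 : 3 * h < e1) by lra.
assert (h2 : 3 * h < e2) by lra.
assert (h3 : 3 * h < e3) by lra.
assert (hle1 : h <= 1) by lra.
assert (h4 : h * (216 * K2 + 1) < Rabs c2) by (apply lt_div; lra).
clear Q1 Q2 Q3 Q4 Q5 Q6 Q7 Q8.
set (xj := xc - lam * h).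
assert (Hxj : xj = xc + (- lam) * h) by (unfold xj; ring).
assert (Hmu : Rabs (- lam) <= 1) by (rewrite Rabs_Ropp; apply Rabs_le; lra).
clearbody xj.
assert (HD3 : Rabs ((fv f xj h 2 - 3 * fv f xj h 1 + 3 * fv f xj h 0 - fv f xj h (-1)) - 0) <= 8 * (K2 * (3 * h) ^ 3)).
{ apply (comb f xc 2 e2 K2 HT2 HK2 xj (- lam) h Hxj Hmu hpos h2 0 (-1) 3 (-3) 1);
  [ring | rewrite !Tn2; field | absnum]. }
assert (HD2 : Rabs ((2 * fv f xj h 1 - 3 * fv f xj h 0 + fv f xj h (-1)) - 0) <= 6 * (K1 * (3 * h) ^ 2)).
{ apply (comb f xc 1 e1 K1 HT1 HK1 xj (- lam) h Hxj Hmu hpos h1 0 1 (-3) 2 0);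
  [ring | rewrite !Tn1, H1; ring | absnum]. }
assert (HB0 : Rabs ((fv f xj h (-2) - 2 * fv f xj h (-1) + fv f xj h 0) - c2 * h ^ 2) <= 4 * (K2 * (3 * h) ^ 3)).
{ apply (comb f xc 2 e2 K2 HT2 HK2 xj (- lam) h Hxj Hmu hpos h2 1 (-2) 1 0 0);
  [ring | rewrite !Tn2; unfold c2; field | absnum]. }
assert (HB1 : Rabs ((fv f xj h 0 - 2 * fv f xj h 1 + fv f xj h 2) - c2 * h ^ 2) <= 4 * (K2 * (3 * h) ^ 3)).
{ apply (comb f xc 2 e2 K2 HT2 HK2 xj (- lam) h Hxj Hmu hpos h2 0 0 1 (-2) 1);
  [ring | rewrite !Tn2; unfold c2; field | absnum]. }
assert (HSA : Rabs ((3 * fv f xj h 0 - 4 * fv f xj h 1 + fv f xj h 2) + (3 * fv f xj h 0 - 4 * fv f xj h (-1) + fv f xj h (-2)) - 0) <= 16 * (K3 * (3 * h) ^ 4)).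
{ apply (comb f xc 3 e3 K3 HT3 HK3 xj (- lam) h Hxj Hmu hpos h3 1 (-4) 6 (-4) 1);
  [ring | rewrite !Tn3; field | absnum]. }
assert (HDA : Rabs ((3 * fv f xj h 0 - 4 * fv f xj h 1 + fv f xj h 2) - (3 * fv f xj h 0 - 4 * fv f xj h (-1) + fv f xj h (-2)) - 0) <= 10 * (K1 * (3 * h) ^ 2)).
{ apply (comb f xc 1 e1 K1 HT1 HK1 xj (- lam) h Hxj Hmu hpos h1 (-1) 4 0 (-4) 1);
  [ring | rewrite !Tn1, H1; ring | absnum]. }
assert (HDB : Rabs ((fv f xj h 0 - 2 * fv f xj h 1 + fv f xj h 2) - (fv f xj h (-2) - 2 * fv f xj h (-1) + fv f xj h 0) - 0) <= 6 * (K2 * (3 * h) ^ 3)).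
{ apply (comb f xc 2 e2 K2 HT2 HK2 xj (- lam) h Hxj Hmu hpos h2 (-1) 2 0 (-2) 1);
  [ring | rewrite !Tn2; field | absnum]. }
assert (HSB : Rabs ((fv f xj h 0 - 2 * fv f xj h 1 + fv f xj h 2) + (fv f xj h (-2) - 2 * fv f xj h (-1) + fv f xj h 0) - 0) <= 8 * (K1 * (3 * h) ^ 2)).
{ apply (comb f xc 1 e1 K1 HT1 HK1 xj (- lam) h Hxj Hmu hpos h1 1 (-2) 2 (-2) 1);
  [ring | rewrite !Tn1, H1; ring | absnum]. }
rewrite Rminus_0_r in HD3, HD2, HSA, HDA, HDB, HSB.
assert (Htau : tau4 f xj h <= T * h ^ 5).
{ unfold tau4. eapply Rle_trans. apply prod_le; [exact HD3 | exact HD2]. unfold T. right. ring. }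
assert (Htau0 : 0 <= tau4 f xj h) by (unfold tau4; apply Rabs_pos).
assert (Hh4 : 0 < h ^ 4) by (apply pow_lt; lra).
assert (Hsm : 4 * (K2 * (3 * h) ^ 3) <= Rabs (c2 * h ^ 2) / 2).
{ rewrite Rabs_mult, (Rabs_pos_eq (h ^ 2)) by (apply pow_le; lra).
  assert (Hp : 0 < h ^ 2) by (apply pow_lt; lra).
  replace (4 * (K2 * (3 * h) ^ 3)) with ((108 * K2 * h) * h ^ 2) by ring.
  replace (Rabs c2 * h ^ 2 / 2) with ((Rabs c2 / 2) * h ^ 2) by field.
  apply Rmult_le_compat_r; lra. }
assert (Hb0 : c * h ^ 4 <= beta0s Cb f xj h).
{ unfold beta0s. cbv zeta.
  assert (L := lower_sq _ _ _ HB0 Hsm).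
  pose proof (pow2_ge_0 (3 * fv f xj h 0 - 4 * fv f xj h (-1) + fv f xj h (-2))).
  unfold c. replace ((c2 * h ^ 2) ^ 2 / 4) with (c2 ^ 2 / 4 * h ^ 4) in L by field.
  assert (0 < / 4) by lra. nra. }
assert (Hb1 : c * h ^ 4 <= beta1s Cb f xj h).
{ unfold beta1s. cbv zeta.
  assert (L := lower_sq _ _ _ HB1 Hsm).
  pose proof (pow2_ge_0 (3 * fv f xj h 0 - 4 * fv f xj h 1 + fv f xj h 2)).
  unfold c. replace ((c2 * h ^ 2) ^ 2 / 4) with (c2 ^ 2 / 4 * h ^ 4) in L by field.
  assert (0 < / 4) by lra. nra. }
assert (Hch : 0 < c * h ^ 4) by nra.
assert (Hdiff : Rabs (beta1s Cb f xj h - beta0s Cb f xj h) <= D * h ^ 5).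
{ unfold beta0s, beta1s. cbv zeta.
  match goal with |- Rabs (/ 4 * ?A1 ^ 2 + Cb * ?B1 ^ 2 - (/ 4 * ?A0 ^ 2 + Cb * ?B0 ^ 2)) <= _ =>
    replace (/ 4 * A1 ^ 2 + Cb * B1 ^ 2 - (/ 4 * A0 ^ 2 + Cb * B0 ^ 2))
      with (/ 4 * ((A1 - A0) * (A1 + A0)) + Cb * ((B1 - B0) * (B1 + B0))) by ring end.
  eapply Rle_trans. apply Rabs_triang.
  rewrite !Rabs_mult, (Rabs_pos_eq (/ 4)), (Rabs_pos_eq Cb) by lra.
  rewrite <- !Rabs_mult.
  assert (P1 := prod_le _ _ _ _ HDA HSA).
  assert (P2 := prod_le _ _ _ _ HDB HSB).
  assert (Hh5 : 0 <= h ^ 5) by (apply pow_le; lra).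
  assert (E1 : 10 * (K1 * (3 * h) ^ 2) * (16 * (K3 * (3 * h) ^ 4)) <= (10 * (K1 * 9)) * (16 * (K3 * 81)) * h ^ 5).
  { replace (10 * (K1 * (3 * h) ^ 2) * (16 * (K3 * (3 * h) ^ 4))) with ((10 * (K1 * 9)) * (16 * (K3 * 81)) * h ^ 5 * h) by ring.
    assert (0 <= (10 * (K1 * 9)) * (16 * (K3 * 81)) * h ^ 5) by (apply Rmult_le_pos; [nra|lra]). nra. }
  assert (E2 : 6 * (K2 * (3 * h) ^ 3) * (8 * (K1 * (3 * h) ^ 2)) = (6 * (K2 * 27)) * (8 * (K1 * 9)) * h ^ 5) by ring.
  unfold D. assert (0 < / 4) by lra. nra. }
assert (Id : tau4 f xj h / beta0s Cb f xj h - tau4 f xj h / beta1s Cb f xj h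
   = (tau4 f xj h * (beta1s Cb f xj h - beta0s Cb f xj h)) / (beta0s Cb f xj h * beta1s Cb f xj h))
  by (field; split; lra).
assert (P0 : 0 <= tau4 f xj h / beta0s Cb f xj h) by (apply Rdiv_le_0_compat; lra).
assert (P1 : 0 <= tau4 f xj h / beta1s Cb f xj h) by (apply Rdiv_le_0_compat; lra).
split; [exact P0|split; [exact P1|]].
rewrite Id. unfold Rdiv at 1. rewrite Rabs_mult, Rabs_Rinv by nra.
rewrite (Rabs_pos_eq (beta0s Cb f xj h * beta1s Cb f xj h)) by nra.
replace (T * D / (c * c) * h ^ 2) with ((T * h ^ 5) * (D * h ^ 5) / ((c * h ^ 4) * (c * h ^ 4))) by (field; lra).
apply div_le.
- apply Rabs_pos.
- rewrite Rabs_mult, (Rabs_pos_eq (tau4 f xj h)) by lra.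
  apply Rmult_le_compat; auto. apply Rabs_pos.
- nra.
- apply Rmult_le_compat; lra.
Qed.

Lemma fin (d0 d1 Ca Cb : R) (f : R -> R) (X : R -> R) :
  0 < d0 -> 0 < d1 -> d0 + d1 = 1 -> 0 < Ca ->
  (exists M delta, 0 < delta /\ forall h, 0 < h < delta ->
    0 <= tau4 f (X h) h / beta0s Cb f (X h) h /\ 0 <= tau4 f (X h) h / beta1s Cb f (X h) h /\
    Rabs (tau4 f (X h) h / beta0s Cb f (X h) h - tau4 f (X h) h / beta1s Cb f (X h) h) <= M * h ^ 2) ->
  bigO_sq_right (fun dx => omega0 d0 d1 Ca Cb f (X dx) dx - d0) /\
  bigO_sq_right (fun dx => omega1 d0 d1 Ca Cb f (X dx) dx - d1).
Proof.
intros H0 H1 H01 HCa [M [delta [Hdel H]]].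
assert (Hk : 0 <= d0 * d1 * Ca) by (apply Rmult_le_pos; [apply Rmult_le_pos|]; lra).
split; exists (d0 * d1 * Ca * M), delta; split; auto; intros dx Hdx;
  destruct (H dx Hdx) as [P0 [P1 B]];
  destruct (omega_diff d0 d1 Ca _ _ H0 H1 H01 HCa P0 P1) as [O0 O1];
  unfold omega0, omega1, alpha0, alpha1;
  (eapply Rle_trans; [eassumption|]);
  replace (d0 * d1 * Ca * M * dx ^ 2) with (d0 * d1 * Ca * (M * dx ^ 2)) by ring; apply Rmult_le_compat_l; auto.
Qed.

Theorem mainTheorem5 (d0 d1 Ca Cb : R) :
  0 < d0 -> 0 < d1 -> d0 + d1 = 1 -> 0 < Ca -> 0 < Cb ->
  (forall (f : R -> R) (xs : R),
      C6_near f xs -> Derive_n f 1 xs <> 0 ->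
      bigO_sq_right (fun dx => omega0 d0 d1 Ca Cb f xs dx - d0) /\
      bigO_sq_right (fun dx => omega1 d0 d1 Ca Cb f xs dx - d1)) /\
  (forall (f : R -> R) (xc lam : R),
      C6_near f xc ->
      Derive_n f 1 xc = 0 -> Derive_n f 2 xc <> 0 -> Derive_n f 3 xc <> 0 ->
      -1 < lam < 1 ->
      bigO_sq_right (fun dx => omega0 d0 d1 Ca Cb f (xc - lam * dx) dx - d0) /\
      bigO_sq_right (fun dx => omega1 d0 d1 Ca Cb f (xc - lam * dx) dx - d1)).
Proof.
intros H0 H1 H01 HCa HCb. split.
- intros f xs HC Hf. apply (fin d0 d1 Ca Cb f (fun _ => xs)); auto.
  apply case1; auto.
- intros f xc lam HC Hf1 Hf2 Hf3 Hl.
  apply (fin d0 d1 Ca Cb f (fun h => xc - lam * h)); auto.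
  apply case2; auto.
Qed.
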